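(* The number of cycles of the Collatz map $T$ contained in the positive integers (including the trivial cycle $\{1,2\}$) is bounded above by the index \[ \operatorname{ind}(Id-\mathcal{T})=\dim\operatorname{Ker}(Id-\mathcal{T})-\dim\operatorname{Ker}(Id-\mathcal{T})^* \] of the operator $Id-\mathcal{T}\in\mathcal{L}(H^2(D))$.
   Context: $T:\mathbb{Z}\to\mathbb{Z}$ is the Collatz map $T(n)=\frac{3n+1}2$ ($n$ odd), $T(n)=\frac n2$ ($n$ even); a cycle is a finite set $\{n_1,\dots,n_k\}$ with $T(n_i)=n_{i+1}$, $T(n_k)=n_1$. $D$ is the open unit disk and $H^2(D)$ the Hardy space of holomorphic $\sum a_nz^n$ on $D$ with $\sum|a_n|^2<\infty$. $\mathcal{T}\in\mathcal{L}(H^2(D))$ is given by $\mathcal{T}\big(\sum_{n\ge0}a_nz^n\big)=\sum_{n\ge0}a_nz^{T(n)}$, and $(Id-\mathcal{T})^*$ is the Hilbert-space adjoint. If $\dim\operatorname{Ker}(Id-\mathcal{T})=\infty$ the index is interpreted as $+\infty$. *)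

(* Defs.v *)
From Stdlib Require Import Reals ZArith List.
From Coquelicot Require Import Coquelicot.

Notation CC := Complex.C.
Local Open Scope C_scope.

Definition T (n : Z) : Z :=
  if Z.odd n then ((3 * n + 1) / 2)%Z else (n / 2)%Z.

(** A cycle of T, given by a (nonempty) listing [n_1; ...; n_k] with
    T n_i = n_{i+1} and T n_k = n_1.  The cycle itself is the set of
    elements of the list. *)
Definition is_cycle (l : list Z) : Prop :=
  l <> nil /\
  forall i, (i < length l)%nat ->
    T (nth i l 0%Z) = nth ((i + 1) mod length l) l 0%Z.

Definition positive_cycle (l : list Z) : Prop :=
  is_cycle l /\ List.Forall (fun n => (0 < n)%Z) l.

Definition same_cycle (l1 l2 : list Z) : Prop :=
  forall x, In x l1 <-> In x l2.

(** H^2(D) is modelled by its Taylor coefficient sequences: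
    f = sum a_n z^n is in H^2 iff sum |a_n|^2 < oo. *)
Definition H2 (a : nat -> CC) : Prop :=
  ex_series (fun n => (Cmod (a n) ^ 2)%R).

(** The operator calT: sum a_n z^n |-> sum a_n z^{T n}.  The coefficient
    of z^m in the image is the sum of a_n over n with T n = m; every such
    n satisfies n <= 2m, so this is a finite sum. *)
Fixpoint sum_upto (f : nat -> CC) (N : nat) : CC :=
  match N with
  | O => f O
  | S N' => sum_upto f N' + f N
  end.

Definition calT (a : nat -> CC) (m : nat) : CC :=
  sum_upto (fun n => if Z.eqb (T (Z.of_nat n)) (Z.of_nat m) then a n else 0)
           (2 * m).

Definition IdmT (a : nat -> CC) (m : nat) : CC := a m - calT a m.

(** B is the Hilbert-space adjoint of A on H^2 (inner product
    <f, g> = sum_n f_n * conj (g_n)): B maps H^2 to H^2 and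
    <A a, b> = <a, B b> for all a, b in H^2. *)
Definition is_adjoint (A B : (nat -> CC) -> (nat -> CC)) : Prop :=
  forall a b, H2 a -> H2 b ->
    H2 (B b) /\
    exists l : CC,
      is_series (fun n => A a n * Cconj (b n)) l /\
      is_series (fun n => a n * Cconj (B b n)) l.

Definition Ker (A : (nat -> CC) -> (nat -> CC)) (a : nat -> CC) : Prop :=
  H2 a /\ forall m, A a m = 0.

Fixpoint lincomb (k : nat) (c : nat -> CC) (v : nat -> nat -> CC) (j : nat) : CC :=
  match k with
  | O => 0
  | S k' => lincomb k' c v j + c k' * v k' j
  end.

Definition lin_indep (k : nat) (v : nat -> nat -> CC) : Prop :=
  forall c : nat -> CC,
    (forall j, lincomb k c v j = 0) -> forall i, (i < k)%nat -> c i = 0.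

Definition dim_ge (V : (nat -> CC) -> Prop) (k : nat) : Prop :=
  exists v : nat -> nat -> CC,
    (forall i, (i < k)%nat -> V (v i)) /\ lin_indep k v.

Definition dim_eq (V : (nat -> CC) -> Prop) (k : nat) : Prop :=
  dim_ge V k /\ ~ dim_ge V (S k).

Definition dim_infinite (V : (nat -> CC) -> Prop) : Prop :=
  forall k, dim_ge V k.

(* Main.v *)
Require Import Defs.
From Stdlib Require Import Reals ZArith List Lia Lra Classical.
From Coquelicot Require Import Coquelicot.
Local Open Scope C_scope.
Ltac cring := match goal with |- ?a = ?b => change (@eq C a b); ring end.

Lemma series_uniq (a : nat -> CC) (x y : CC) : is_series a x -> is_series a y -> x = y.
Proof. intros H1 H2. eapply (filterlim_locally_unique (F:=eventually)); eauto. Qed.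

Lemma sum_n_ev (a : nat -> CC) N : (forall n, (N < n)%nat -> a n = 0) ->
  forall n, (N <= n)%nat -> sum_n a n = sum_n a N.
Proof.
  intros H n Hn. induction Hn. reflexivity.
  rewrite sum_Sn, IHHn, H by lia. change (sum_n a N + 0 = sum_n a N). ring.
Qed.

Lemma is_series_ev (a : nat -> CC) N : (forall n, (N < n)%nat -> a n = 0) ->
  is_series a (sum_n a N).
Proof.
  intros H. unfold is_series. eapply filterlim_ext_loc; [|apply filterlim_const].
  exists N. intros n Hn. symmetry. apply sum_n_ev; auto.
Qed.

Lemma sum_n_pt (j : nat) (x : CC) m :
  sum_n (fun n => (if Nat.eqb n j then x else RtoC 0) : CC) m = if Nat.leb j m then x else RtoC 0.
Proof.
  induction m.
  - rewrite sum_O. destruct j; simpl; auto.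
  - rewrite sum_Sn, IHm. change plus with Cplus.
    destruct (Nat.eqb_spec (S m) j); destruct (Nat.leb_spec j m); destruct (Nat.leb_spec j (S m));
    try lia; cring.
Qed.

Lemma is_series_pt (j : nat) (x : CC) : is_series (fun n => (if Nat.eqb n j then x else RtoC 0) : CC) x.
Proof.
  pose proof (is_series_ev (fun n => (if Nat.eqb n j then x else RtoC 0) : CC) j) as H.
  rewrite sum_n_pt, Nat.leb_refl in H. apply H.
  intros n Hn. destruct (Nat.eqb_spec n j); auto; lia.
Qed.

Lemma ex_series_ev (a : nat -> R) N : (forall n, (N < n)%nat -> a n = 0%R) -> ex_series a.
Proof.
  intros H. exists (sum_n a N). unfold is_series. eapply filterlim_ext_loc; [|apply filterlim_const].
  exists N. intros n Hn. symmetry. induction Hn. reflexivity.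
  rewrite sum_Sn, IHHn, H by lia. change (sum_n a N + 0 = sum_n a N)%R. ring.
Qed.

Lemma H2_ev (a : nat -> CC) N : (forall n, (N < n)%nat -> a n = 0) -> H2 a.
Proof.
  intros H. unfold H2. apply (ex_series_ev _ N). intros n Hn. rewrite H by lia.
  rewrite Cmod_0. ring.
Qed.
Lemma T_bound z : (0 <= z)%Z -> (0 <= T z /\ z <= 2 * T z)%Z.
Proof.
  intros Hz. unfold T. destruct (Z.odd z) eqn:E.
  - apply Z.odd_spec in E. destruct E as [b Hb]. subst. 
    rewrite Z.mul_comm. Z.to_euclidean_division_equations. lia.
  - assert (Z.even z = true) by (rewrite <- Z.negb_odd, E; reflexivity).
    apply Z.even_spec in H. destruct H as [b Hb]. subst. Z.to_euclidean_division_equations. lia.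
Qed.

Lemma T_double z : T (2 * z) = z.
Proof.
  unfold T. rewrite Z.odd_mul. change ((2 * z / 2)%Z = z).
  rewrite Z.mul_comm, Z.div_mul; lia. Qed.

Lemma T0 : T 0 = 0%Z.
Proof. reflexivity. Qed.

Lemma sum_upto_ext f g N : (forall n, f n = g n) -> sum_upto f N = sum_upto g N.
Proof. intros H. induction N; simpl; rewrite ?IHN, ?H; auto. Qed.

Lemma sum_upto_S f N : sum_upto f (S N) = sum_upto f N + f (S N).
Proof. reflexivity. Qed.

Lemma sum_upto_pt (j : nat) (x : CC) N :
  sum_upto (fun n => if Nat.eqb n j then x else 0) N = if Nat.leb j N then x else 0.
Proof.
  induction N.
  - destruct j; simpl; auto.
  - rewrite sum_upto_S, IHN.
    destruct (Nat.eqb_spec (S N) j); destruct (Nat.leb_spec j N); destruct (Nat.leb_spec j (S N));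
    try lia; ring.
Qed.

Definition e (j : nat) (n : nat) : CC := if Nat.eqb n j then 1 else 0.
Definition Tn (j : nat) : nat := Z.to_nat (T (Z.of_nat j)).

Lemma Tn_eqb j n : Z.eqb (T (Z.of_nat j)) (Z.of_nat n) = Nat.eqb n (Tn j).
Proof.
  unfold Tn. destruct (T_bound (Z.of_nat j)) as [H1 H2]; [lia|].
  destruct (Z.eqb_spec (T (Z.of_nat j)) (Z.of_nat n)); destruct (Nat.eqb_spec n (Z.to_nat (T (Z.of_nat j)))); auto; lia.
Qed.

Lemma calT_e j n : calT (e j) n = e (Tn j) n.
Proof.
  unfold calT.
  rewrite (sum_upto_ext _ (fun i => if Nat.eqb i j then e (Tn j) n else 0)).
  - rewrite sum_upto_pt. destruct (Nat.leb_spec j (2*n)); auto.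
    unfold e. destruct (Nat.eqb_spec n (Tn j)); auto. subst. unfold Tn in H.
    destruct (T_bound (Z.of_nat j)); lia.
  - intros i. rewrite Tn_eqb. unfold e.
    destruct (Nat.eqb_spec i j); subst; destruct (Nat.eqb_spec n (Tn j)); auto;
    destruct (Nat.eqb n (Tn i)); auto.
Qed.

Lemma IdmT_e j n : IdmT (e j) n = e j n - e (Tn j) n.
Proof. unfold IdmT. rewrite calT_e. reflexivity. Qed.

Lemma H2_e j : H2 (e j).
Proof. apply (H2_ev _ j). intros n Hn. unfold e. destruct (Nat.eqb_spec n j); auto; lia. Qed.

Lemma IdmT_0 a : IdmT a 0 = 0.
Proof. unfold IdmT, calT. simpl. ring. Qed.

Lemma Cconj_inj x y : Cconj x = Cconj y -> x = y.
Proof. intros H. rewrite <- (Cconj_conj x), <- (Cconj_conj y), H. reflexivity. Qed.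

Lemma Cconj0 : Cconj 0 = 0.
Proof. unfold Cconj. simpl. apply injective_projections; simpl; ring. Qed.

Lemma KerB_shift B (hB : is_adjoint IdmT B) b : Ker B b -> forall j, b j = b (Tn j).
Proof.
  intros [Hb HB0] j. destruct (hB (e j) b (H2_e j) Hb) as [_ [l [H1 H2]]].
  assert (Hl : l = 0).
  { eapply series_uniq; [exact H2|]. eapply is_series_ext; [|apply (is_series_pt j 0)].
    intros n. simpl. rewrite HB0, Cconj0. unfold e. destruct (Nat.eqb n j); cring. }
  subst l.
  assert (Hs := is_series_minus _ _ _ _ (is_series_pt j (Cconj (b j))) (is_series_pt (Tn j) (Cconj (b (Tn j))))).
  assert (Heq : plus (Cconj (b j)) (opp (Cconj (b (Tn j)))) = RtoC 0).
  { eapply series_uniq; [exact Hs|]. eapply is_series_ext; [|exact H1].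
    intros n. cbv beta. rewrite IdmT_e. unfold e. change plus with Cplus. change opp with Copp.
    destruct (Nat.eqb_spec n j); destruct (Nat.eqb_spec n (Tn j)); subst; try cring.
    rewrite <- e1. cring. }
  apply Cconj_inj. change plus with Cplus in Heq. change opp with Copp in Heq.
  transitivity (Cconj (b j) + - Cconj (b (Tn j)) + Cconj (b (Tn j))); [cring|].
  rewrite Heq. cring.
Qed.

Lemma Tn_double m : Tn (2 * m) = m.
Proof. unfold Tn. rewrite Nat2Z.inj_mul. change (Z.of_nat 2) with 2%Z. rewrite T_double. apply Nat2Z.id. Qed.

Lemma KerB_zero B (hB : is_adjoint IdmT B) b : Ker B b -> forall j, (1 <= j)%nat -> b j = 0.
Proof.
  intros Hk j Hj.
  assert (Hp : forall t, b (2 ^ t * j)%nat = b j).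
  { induction t. simpl. f_equal. lia.
    rewrite (KerB_shift B hB b Hk). replace (2 ^ S t * j)%nat with (2 * (2 ^ t * j))%nat by (simpl; lia).
    rewrite Tn_double. exact IHt. }
  destruct (Ceq_dec (b j) 0) as [E|E]; auto. exfalso.
  destruct Hk as [Hb _]. apply ex_series_lim_0 in Hb. apply is_lim_seq_spec in Hb.
  assert (Hpos : (0 < Cmod (b j) ^ 2)%R).
  { apply pow_lt. destruct (Cmod_ge_0 (b j)) as [H|H]; auto. symmetry in H. apply Cmod_eq_0 in H. contradiction. }
  destruct (Hb (mkposreal _ Hpos)) as [N HN].
  assert (N < 2 ^ N)%nat by (apply Nat.pow_gt_lin_r; lia).
  specialize (HN (2 ^ N * j)%nat ltac:(nia)).
  rewrite Hp in HN. simpl in HN. rewrite Rminus_0_r, Rabs_pos_eq in HN.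
  - lra.
  - apply (pow_le _ 2), Cmod_ge_0.
Qed.

Lemma e0_KerB B (hB : is_adjoint IdmT B) : Ker B (e 0).
Proof.
  split; [apply H2_e|]. intros m.
  destruct (hB (e m) (e 0) (H2_e m) (H2_e 0)) as [_ [l [H1 H2]]].
  assert (Hl : l = 0).
  { eapply series_uniq; [exact H1|]. eapply is_series_ext; [|apply (is_series_pt 0 0)].
    intros n. destruct n. rewrite IdmT_0. simpl. cring. unfold e at 2. simpl. rewrite Cconj0. cring. }
  subst l.
  assert (Heq : Cconj (B (e 0) m) = 0).
  { eapply series_uniq; [|exact H2]. eapply is_series_ext; [|apply (is_series_pt m)].
    intros n. unfold e. destruct (Nat.eqb_spec n m); subst; cring. }
  apply Cconj_inj. rewrite Heq, Cconj0. reflexivity.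
Qed.

Lemma C1_neq_0 : (1 : CC) <> 0.
Proof. intros H. injection H. lra. Qed.

Lemma dimKerB B (hB : is_adjoint IdmT B) : dim_eq (Ker B) 1.
Proof.
  split.
  - exists (fun _ => e 0). split. intros; apply e0_KerB; auto.
    intros c Hc i Hi. assert (i = 0)%nat by lia. subst. specialize (Hc 0%nat).
    simpl in Hc. unfold e in Hc. simpl in Hc. rewrite <- Hc. cring.
  - intros [v [Hv Hi]].
    assert (Hu := Hv 0%nat ltac:(lia)). assert (Hw := Hv 1%nat ltac:(lia)).
    assert (Z0 : forall i j, (i < 2)%nat -> (1 <= j)%nat -> v i j = 0).
    { intros i j H1 H2. apply (KerB_zero B hB); auto. }
    assert (H0 := Hi (fun i => match i with O => v 1%nat 0%nat | _ => - v 0%nat 0%nat end)).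
    assert (A1 : v 1%nat 0%nat = 0 /\ - v 0%nat 0%nat = 0).
    { split; [apply (H0 ltac:(intros j; destruct j; simpl; [cring|rewrite (Z0 0%nat (S j)), (Z0 1%nat (S j)) by lia; cring]) 0%nat)|
              apply (H0 ltac:(intros j; destruct j; simpl; [cring|rewrite (Z0 0%nat (S j)), (Z0 1%nat (S j)) by lia; cring]) 1%nat)]; lia. }
    destruct A1 as [A1 A2].
    assert (H3 := Hi (fun i => match i with O => 1 | _ => 0 end)).
    assert (L : forall j, lincomb 2 (fun i : nat => match i with O => 1 | _ => 0 end) v j = 0).
    { intros j; destruct j; simpl.
      - replace (v 0%nat 0%nat) with (- - v 0%nat 0%nat) by cring. rewrite A2, A1. cring.
      - rewrite (Z0 0%nat (S j)), (Z0 1%nat (S j)) by lia; cring. }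
    apply C1_neq_0. apply (H3 L 0%nat). lia.
Qed.

Definition cnt (l : list Z) (y : Z) : nat := length (filter (fun x => Z.eqb x y) l).
Definition mv (l : list Z) (m : nat) : CC := RtoC (INR (cnt l (Z.of_nat m))).

Fixpoint snat (h : nat -> nat) (N : nat) : nat :=
  match N with O => h O | S N' => (snat h N' + h N)%nat end.

Lemma snat_ext f g N : (forall n, f n = g n) -> snat f N = snat g N.
Proof. intros H. induction N; simpl; rewrite ?IHN, ?H; auto. Qed.

Lemma snat_add f g N : snat (fun n => f n + g n)%nat N = (snat f N + snat g N)%nat.
Proof. induction N; simpl; auto. rewrite IHN. lia. Qed.

Lemma snat_S h N : snat h (S N) = (snat h N + h (S N))%nat.
Proof. reflexivity. Qed.

Lemma snat_pt (x : Z) (p : bool) N : (0 <= x)%Z ->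
  snat (fun n => if Z.eqb x (Z.of_nat n) then (if p then 1 else 0) else 0)%nat N
  = (if andb p (x <=? Z.of_nat N)%Z then 1 else 0)%nat.
Proof.
  intros Hx. induction N.
  - change (snat ?h 0) with (h 0%nat). cbv beta.
    destruct p; cbn [andb]; destruct (Z.eqb_spec x (Z.of_nat 0)); destruct (Z.leb_spec x (Z.of_nat 0)); lia.
  - rewrite snat_S, IHN. cbv beta. destruct p; cbn [andb].
    + destruct (Z.eqb_spec x (Z.of_nat (S N))); destruct (Z.leb_spec x (Z.of_nat N));
      destruct (Z.leb_spec x (Z.of_nat (S N))); lia.
    + destruct (Z.eqb x (Z.of_nat (S N))); lia.
Qed.

Lemma sum_upto_nat h N : sum_upto (fun n => RtoC (INR (h n))) N = RtoC (INR (snat h N)).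
Proof. induction N; simpl sum_upto; simpl snat; auto. rewrite IHN, plus_INR, RtoC_plus. reflexivity. Qed.

Lemma snat_cnt (p : Z -> bool) l N : List.Forall (fun x => (0 <= x)%Z) l ->
  snat (fun n => if p (Z.of_nat n) then cnt l (Z.of_nat n) else 0)%nat N
  = length (filter (fun x => andb (p x) (x <=? Z.of_nat N)%Z) l).
Proof.
  induction l as [|x l IH]; intros Hf.
  - simpl. unfold cnt. simpl. induction N; simpl; auto; destruct (p _); simpl; lia.
  - inversion Hf; subst.
    rewrite (snat_ext _ (fun n => (if Z.eqb x (Z.of_nat n) then (if p x then 1 else 0) else 0)
        + (if p (Z.of_nat n) then cnt l (Z.of_nat n) else 0))%nat).
    + rewrite snat_add, snat_pt, IH by auto. simpl.
      destruct (andb (p x) (x <=? Z.of_nat N)%Z); simpl; auto.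
    + intros n. unfold cnt. simpl.
      destruct (Z.eqb_spec x (Z.of_nat n)); subst; simpl; destruct (p (Z.of_nat n)); simpl; auto.
Qed.

Lemma len_filter_map l z : length (filter (fun x => Z.eqb (T x) z) l) = cnt (map T l) z.
Proof. induction l; simpl; auto. unfold cnt in *. simpl. destruct (Z.eqb (T a) z); simpl; auto. Qed.

Lemma cycle_map l : is_cycle l -> map T l = tl l ++ (hd 0%Z l :: nil).
Proof.
  intros [Hne Hc]. destruct l as [|x l']; [congruence|]. cbn [tl hd].
  apply nth_ext with (d := 0%Z) (d' := 0%Z).
  - rewrite length_map, length_app. simpl. lia.
  - intros n Hn. rewrite length_map in Hn.
    change 0%Z with (T 0%Z) at 1. rewrite map_nth. rewrite Hc by auto.
    simpl length in *. destruct (Nat.eq_dec (S n) (S (length l'))).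
    + assert (n = length l') by lia. subst n. rewrite app_nth2 by lia.
      rewrite Nat.sub_diag. rewrite Nat.add_1_r, Nat.Div0.mod_same. reflexivity.
    + rewrite app_nth1 by lia. rewrite Nat.mod_small by lia. rewrite Nat.add_1_r. reflexivity.
Qed.

Lemma cnt_rot l z : is_cycle l -> cnt (map T l) z = cnt l z.
Proof.
  intros H. rewrite cycle_map by auto. destruct H as [Hne _]. destruct l as [|x l']; [congruence|].
  simpl. unfold cnt. rewrite filter_app, length_app. simpl. destruct (Z.eqb x z); simpl; lia.
Qed.

Lemma cnt_bound l : exists N, forall n, (N < n)%nat -> cnt l (Z.of_nat n) = 0%nat.
Proof.
  induction l as [|x l [N HN]].
  - exists 0%nat. intros. reflexivity.
  - exists (Nat.max N (Z.to_nat x)). intros n Hn. unfold cnt. cbn [filter].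
    destruct (Z.eqb_spec x (Z.of_nat n)). lia. apply HN; lia.
Qed.

Lemma Ker_mv l : positive_cycle l -> Ker IdmT (mv l).
Proof.
  intros [Hc Hp]. split.
  - destruct (cnt_bound l) as [N HN]. apply (H2_ev _ N). intros n Hn. unfold mv. rewrite HN by auto.
    reflexivity.
  - intros m. unfold IdmT, calT.
    rewrite (sum_upto_ext _ (fun n => RtoC (INR
       ((fun n => if Z.eqb (T (Z.of_nat n)) (Z.of_nat m) then cnt l (Z.of_nat n) else 0)%nat n)))).
    + rewrite sum_upto_nat.
      rewrite (snat_cnt (fun x => Z.eqb (T x) (Z.of_nat m))) by (eapply Forall_impl; [|exact Hp]; simpl; lia).
      rewrite (filter_ext_in _ (fun x => Z.eqb (T x) (Z.of_nat m))).
      * rewrite len_filter_map, cnt_rot by auto. unfold mv. cring.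
      * intros a Ha. rewrite Forall_forall in Hp. specialize (Hp a Ha).
        destruct (T_bound a) as [H1 H2]; [lia|].
        destruct (Z.eqb_spec (T a) (Z.of_nat m)); simpl; auto. apply Z.leb_le. lia.
    + intros n. destruct (Z.eqb (T (Z.of_nat n)) (Z.of_nat m)); reflexivity.
Qed.

Lemma cnt_In l y : cnt l y <> 0%nat <-> In y l.
Proof.
  induction l; simpl. unfold cnt; simpl; split; [lia|tauto].
  unfold cnt in *. simpl. destruct (Z.eqb_spec a y); simpl; split; intros; auto; try lia.
  - right. apply IHl. auto.
  - destruct H; [congruence|]. apply IHl. auto.
Qed.

Fixpoint iterT (t : nat) (x : Z) : Z := match t with O => x | S t' => T (iterT t' x) end.

Lemma iter_cycle l a t : is_cycle l -> (a < length l)%nat ->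
  iterT t (nth a l 0%Z) = nth ((a + t) mod length l) l 0%Z.
Proof.
  intros [Hne Hc] Ha. induction t; simpl.
  - rewrite Nat.add_0_r, Nat.mod_small; auto.
  - rewrite IHt, Hc. rewrite Nat.Div0.add_mod_idemp_l. f_equal. f_equal. lia.
    apply Nat.mod_upper_bound. destruct l; simpl in *; [congruence|lia].
Qed.

Lemma orbit l x y : is_cycle l -> In x l -> (In y l <-> exists t, y = iterT t x).
Proof.
  intros Hc Hx. destruct (In_nth l x 0%Z Hx) as [a [Ha Hax]].
  assert (Hlen : length l <> 0%nat) by lia.
  split.
  - intros Hy. destruct (In_nth l y 0%Z Hy) as [b [Hb Hby]].
    exists (b + length l - a)%nat. subst. rewrite iter_cycle by auto.
    replace (a + (b + length l - a))%nat with (b + 1 * length l)%nat by lia.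
    rewrite Nat.Div0.mod_add, Nat.mod_small; auto.
  - intros [t Ht]. subst. rewrite iter_cycle by auto. apply nth_In.
    apply Nat.mod_upper_bound. auto.
Qed.

Lemma common_same l1 l2 x : is_cycle l1 -> is_cycle l2 -> In x l1 -> In x l2 -> same_cycle l1 l2.
Proof.
  intros H1 H2 X1 X2 y. rewrite (orbit l1 x y), (orbit l2 x y); auto. tauto.
Qed.

Lemma lincomb_ext K c1 c2 (v : nat -> nat -> CC) x : (forall i, (i < K)%nat -> c1 i = c2 i) ->
  lincomb K c1 v x = lincomb K c2 v x.
Proof. induction K; intros H; simpl; auto. rewrite IHK, H by auto. reflexivity. Qed.

Lemma lincomb_zero K c (v : nat -> nat -> CC) x : (forall i, (i < K)%nat -> v i x = 0) -> lincomb K c v x = 0.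
Proof. induction K; intros H; simpl; auto. rewrite IHK, H by auto. cring. Qed.

Lemma lincomb_pt K c (v : nat -> nat -> CC) x i0 : (i0 < K)%nat ->
  (forall i, (i < K)%nat -> i <> i0 -> v i x = 0) -> lincomb K c v x = c i0 * v i0 x.
Proof.
  induction K; intros Hi H; [lia|]. simpl.
  destruct (Nat.eq_dec i0 K).
  - subst. rewrite lincomb_zero. cring. intros i Hi'. apply H; lia.
  - rewrite IHK by (auto; lia). rewrite (H K) by lia. cring.
Qed.

Lemma dim_ge_mono V i j : dim_ge V i -> (j <= i)%nat -> dim_ge V j.
Proof.
  intros [v [Hv Hl]] Hji. exists v. split. intros; apply Hv; lia.
  intros cc Hcc i0 Hi0.
  set (cc' := fun i => if Nat.ltb i j then cc i else 0).
  assert (Hk : forall K x, (j <= K)%nat -> lincomb K cc' v x = lincomb j cc v x).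
  { intros K x HK. induction HK.
    - apply lincomb_ext. intros i1 Hi1. unfold cc'. destruct (Nat.ltb_spec i1 j); auto; lia.
    - simpl. rewrite IHHK. unfold cc'. destruct (Nat.ltb_spec m j); [lia|]. cring. }
  assert (H := Hl cc' ltac:(intros x; rewrite Hk by auto; apply Hcc) i0 ltac:(lia)).
  unfold cc' in H. destruct (Nat.ltb_spec i0 j); auto; lia.
Qed.

Lemma min_fail (P : nat -> Prop) K : ~ P K -> P 0%nat -> exists n, P n /\ ~ P (S n).
Proof.
  induction K; intros H0 HP; [contradiction|].
  destruct (classic (P K)) as [H|H]; eauto.
Qed.

Lemma INR_C_neq n : n <> 0%nat -> RtoC (INR n) <> 0.
Proof. intros Hn H. injection H. apply not_0_INR. auto. Qed.

Lemma Ker_e0 : Ker IdmT (e 0).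
Proof. split; [apply H2_e|]. intros m. rewrite IdmT_e. change (Tn 0) with 0%nat. cring. Qed.

Lemma KerT_big (k : nat) (c : nat -> list Z)
  (hc : forall i, (i < k)%nat -> positive_cycle (c i))
  (hd : forall i j, (i < k)%nat -> (j < k)%nat -> i <> j -> ~ same_cycle (c i) (c j)) :
  dim_ge (Ker IdmT) (S k).
Proof.
  exists (fun i => if Nat.ltb i k then mv (c i) else e 0). split.
  - intros i Hi. destruct (Nat.ltb_spec i k). apply Ker_mv; auto. apply Ker_e0.
  - intros cc Hcc i Hi. destruct (Nat.ltb_spec i k) as [Hik|Hik].
    + destruct (hc i Hik) as [[Hne Hcy] Hp].
      set (x := nth 0 (c i) 0%Z).
      assert (Hx : In x (c i)). { apply nth_In. destruct (c i); simpl; [congruence|lia]. }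
      assert (Hxp : (0 < x)%Z). { rewrite Forall_forall in Hp. auto. }
      set (j := Z.to_nat x).
      assert (Hj : Z.of_nat j = x) by (unfold j; lia).
      assert (Hz := Hcc j).
      assert (Hside : forall i', (i' < S k)%nat -> i' <> i ->
        (fun i => if Nat.ltb i k then mv (c i) else e 0) i' j = RtoC 0).
      { intros i' Hi' Hne'; cbv beta; destruct (Nat.ltb_spec i' k).
        - unfold mv; rewrite Hj; destruct (Nat.eq_dec (cnt (c i') x) 0) as [E|E].
          + rewrite E; reflexivity.
          + exfalso; apply (hd i i' Hik ltac:(lia) ltac:(auto)).
            destruct (hc i' ltac:(lia)) as [Hc' _]; apply (common_same _ _ x); [split; auto|auto|auto|apply cnt_In; auto].
        - unfold e; destruct (Nat.eqb_spec j 0); [lia|reflexivity]. }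
      rewrite (lincomb_pt (S k) cc (fun i => if Nat.ltb i k then mv (c i) else e 0) j i Hi Hside) in Hz.
      cbv beta in Hz.
      destruct (Nat.ltb_spec i k); [|lia].
      assert (Hnz : mv (c i) j <> 0).
      { unfold mv. apply INR_C_neq. rewrite Hj. apply cnt_In. auto. }
      replace (cc i) with (cc i * mv (c i) j / mv (c i) j) by (field; auto).
      rewrite Hz. field. auto.
    + assert (i = k) by lia. subst i.
      assert (Hz := Hcc 0%nat).
      assert (Hside : forall i', (i' < S k)%nat -> i' <> k ->
        (fun i => if Nat.ltb i k then mv (c i) else e 0) i' 0%nat = RtoC 0).
      { intros i' Hi' Hne'; cbv beta; destruct (Nat.ltb_spec i' k); [|lia].
        unfold mv; destruct (Nat.eq_dec (cnt (c i') (Z.of_nat 0)) 0) as [E|E].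
        - rewrite E; reflexivity.
        - exfalso; apply cnt_In in E.
          destruct (hc i' ltac:(lia)) as [_ Hp]; rewrite Forall_forall in Hp; specialize (Hp _ E); lia. }
      rewrite (lincomb_pt (S k) cc (fun i => if Nat.ltb i k then mv (c i) else e 0) 0%nat k Hi Hside) in Hz.
      cbv beta in Hz.
      destruct (Nat.ltb_spec k k); [lia|]. unfold e in Hz. simpl in Hz.
      rewrite <- Hz. cring.
Qed.

Theorem mainTheorem8
  (B : (nat -> CC) -> (nat -> CC)) (hB : is_adjoint IdmT B)
  (k : nat) (c : nat -> list Z)
  (hc : forall i, (i < k)%nat -> positive_cycle (c i))
  (hd : forall i j, (i < k)%nat -> (j < k)%nat -> i <> j -> ~ same_cycle (c i) (c j)) :
  dim_infinite (Ker IdmT) \/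
  exists n m : nat,
    dim_eq (Ker IdmT) n /\ dim_eq (Ker B) m /\ (k + m <= n)%nat.
Proof.
  assert (HK := KerT_big k c hc hd).
  destruct (classic (dim_infinite (Ker IdmT))) as [H|H]; [left; auto|right].
  unfold dim_infinite in H. apply not_all_ex_not in H. destruct H as [K HKn].
  destruct (min_fail (dim_ge (Ker IdmT)) K HKn) as [n [Hn1 Hn2]].
  { exists (fun _ _ => 0). split. intros; lia. intros cc _ i Hi. lia. }
  exists n, 1%nat. split; [split; auto|]. split; [apply dimKerB; auto|].
  destruct (Nat.le_gt_cases (k + 1) n); auto. exfalso. apply Hn2.
  apply (dim_ge_mono _ (S k)); auto. lia.
Qed.
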